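(* Let $A$ be an $n\times n$ Hermitian matrix ($n\ge2$) with eigenvalues $\lambda_1\ge\dots\ge\lambda_n$ and corresponding orthonormal eigenvectors $v_1,\dots,v_n$. Let $u\in\mathbb C^n$ be a unit vector, and let $\mu_1\ge\dots\ge\mu_{n-1}$ be the eigenvalues of the compression $B=P_uAP_u|_{u^\perp}$, $P_u=I-uu^*$. Set $U_\ell(u):=\sum_{i=\ell}^n|\langle u,v_i\rangle|^2$ and $L_{r+1}(u):=\sum_{i=1}^{r+1}|\langle u,v_i\rangle|^2$. Then for all $1\le\ell\le r\le n-1$ with $U_\ell(u)\ne0$ and $L_{r+1}(u)\ne0$, $$\sum_{j=\ell}^r\lambda_{j+1}+\sum_{j=\ell}^r\frac{|\langle u,v_{j+1}\rangle|^2}{L_{r+1}(u)}(\lambda_\ell-\lambda_{j+1})\le\sum_{j=\ell}^r\mu_j\le\sum_{j=\ell}^r\lambda_j-\sum_{j=\ell}^r\frac{|\langle u,v_j\rangle|^2}{U_\ell(u)}(\lambda_j-\lambda_{r+1}).$$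
   Context: $B$ is the compression of $A$ onto the hyperplane $u^\perp$, i.e. the operator $x\mapsto P_uAx$ on $u^\perp$ (equivalently $U^*AU$ for $U$ with orthonormal columns spanning $u^\perp$). *)

(* Defs.v *)
From HB Require Import structures.
From mathcomp Require Import all_boot all_order all_algebra.
Set Implicit Arguments. Unset Strict Implicit. Unset Printing Implicit Defensive.
Import Order.TTheory GRing.Theory Num.Theory.
Local Open Scope ring_scope.

Definition ctrmx (C : numClosedFieldType) m n (M : 'M[C]_(m, n)) : 'M[C]_(n, m) :=
  (map_mx Num.conj M)^T.

Definition cdot (C : numClosedFieldType) n (x y : 'cV[C]_n) : C :=
  (ctrmx y *m x) 0 0.

(* Compression of A onto the orthogonal complement of u, represented by
   U : 'M_(n, n-1) with orthonormal columns spanning u^perp:  B = U^* A U. *)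
Definition compression (C : numClosedFieldType) n (A : 'M[C]_n)
  (U : 'M[C]_(n, n.-1)) : 'M[C]_(n.-1) := ctrmx U *m A *m U.

(* Main.v *)
Require Import Defs.
From HB Require Import structures.
From mathcomp Require Import all_boot all_order all_algebra.
From mathcomp Require Import zify ring.
Import Order.TTheory GRing.Theory Num.Theory.
Local Open Scope ring_scope.

Section Cdot.
Context {C : numClosedFieldType}.
Implicit Types (n : nat).

Lemma cdotE {n} (x y : 'cV[C]_n) : cdot x y = \sum_k x k 0 * (y k 0)^*.
Proof. rewrite /cdot /ctrmx !mxE; apply: eq_bigr => k _; rewrite !mxE mulrC. by []. Qed.

Lemma cdotC {n} (x y : 'cV[C]_n) : cdot y x = (cdot x y)^*.
Proof. rewrite !cdotE rmorph_sum; apply: eq_bigr => k _. by rewrite rmorphM /= conjCK mulrC. Qed.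

Lemma cdotDl {n} (x y z : 'cV[C]_n) : cdot (x + y) z = cdot x z + cdot y z.
Proof. rewrite !cdotE -big_split; apply: eq_bigr => k _; by rewrite !mxE mulrDl. Qed.

Lemma cdotZl {n} a (x z : 'cV[C]_n) : cdot (a *: x) z = a * cdot x z.
Proof. rewrite !cdotE mulr_sumr; apply: eq_bigr => k _; by rewrite !mxE mulrA. Qed.

Lemma cdotNl {n} (x z : 'cV[C]_n) : cdot (- x) z = - cdot x z.
Proof. by rewrite -scaleN1r cdotZl mulN1r. Qed.

Lemma cdotBl {n} (x y z : 'cV[C]_n) : cdot (x - y) z = cdot x z - cdot y z.
Proof. by rewrite cdotDl cdotNl. Qed.

Lemma cdot0l {n} (z : 'cV[C]_n) : cdot 0 z = 0.
Proof. by rewrite -(scale0r 0) cdotZl mul0r. Qed.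

Lemma cdot_suml {n} I (r : seq I) (P : pred I) (F : I -> 'cV[C]_n) z :
  cdot (\sum_(i <- r | P i) F i) z = \sum_(i <- r | P i) cdot (F i) z.
Proof.
elim/big_rec2: _ => [|i y1 y2 _ <-]; first by rewrite cdot0l.
by rewrite cdotDl.
Qed.

Lemma cdotDr {n} (x y z : 'cV[C]_n) : cdot z (x + y) = cdot z x + cdot z y.
Proof. by rewrite cdotC cdotDl rmorphD /= -!cdotC. Qed.

Lemma cdotZr {n} a (x z : 'cV[C]_n) : cdot z (a *: x) = a^* * cdot z x.
Proof. by rewrite cdotC cdotZl rmorphM /= -cdotC. Qed.

Lemma cdotBr {n} (x y z : 'cV[C]_n) : cdot z (x - y) = cdot z x - cdot z y.
Proof. by rewrite cdotC cdotBl rmorphB /= -!cdotC. Qed.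

Lemma cdot0r {n} (z : 'cV[C]_n) : cdot z 0 = 0.
Proof. by rewrite cdotC cdot0l conjC0. Qed.

Lemma cdot_sumr {n} I (r : seq I) (P : pred I) (F : I -> 'cV[C]_n) z :
  cdot z (\sum_(i <- r | P i) F i) = \sum_(i <- r | P i) cdot z (F i).
Proof. by rewrite cdotC cdot_suml rmorph_sum; apply: eq_bigr => i _; rewrite /= -cdotC. Qed.

Lemma cdotnn {n} (x : 'cV[C]_n) : cdot x x = \sum_k `|x k 0| ^+ 2.
Proof. rewrite cdotE; apply: eq_bigr => k _; by rewrite normCK. Qed.

Lemma cdot_ge0 {n} (x : 'cV[C]_n) : 0 <= cdot x x.
Proof. rewrite cdotnn; apply: sumr_ge0 => k _; exact: exprn_ge0. Qed.

Lemma cdot_real {n} (x : 'cV[C]_n) : (cdot x x)^* = cdot x x.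
Proof. by rewrite -cdotC. Qed.


Lemma onb_expand {n} {f : nat -> 'cV[C]_n} :
  (forall i j, (i < n)%N -> (j < n)%N -> cdot (f i) (f j) = (i == j)%:R) ->
  forall z, z = \sum_(i < n) cdot z (f i) *: f i.
Proof.
move=> hf z.
pose F : 'M[C]_n := \matrix_(k, i) f (val i) k 0.
have h1 : ctrmx F *m F = 1%:M.
  apply/matrixP => i j; rewrite !mxE.
  have -> : \sum_k ctrmx F i k * F k j = cdot (f j) (f i).
    rewrite cdotE; apply: eq_bigr => k _; by rewrite /ctrmx !mxE mulrC.
  by rewrite hf // eq_sym.
have h2 : F *m ctrmx F = 1%:M by apply: mulmx1C.
apply/matrixP => k c; rewrite (ord1 c).
have -> : z k 0 = (F *m (ctrmx F *m z)) k 0 by rewrite mulmxA h2 mul1mx.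
rewrite summxE !mxE; apply: eq_bigr => i _; rewrite !mxE.
have -> : \sum_j ctrmx F i j * z j 0 = cdot z (f i).
  rewrite cdotE; apply: eq_bigr => j _; by rewrite /ctrmx !mxE mulrC.
by rewrite mulrC.
Qed.

Lemma onb_parseval {n} {f : nat -> 'cV[C]_n} :
  (forall i j, (i < n)%N -> (j < n)%N -> cdot (f i) (f j) = (i == j)%:R) ->
  forall z, cdot z z = \sum_(i < n) `|cdot z (f i)| ^+ 2.
Proof.
move=> hf z; rewrite {1}(onb_expand hf z) cdot_suml; apply: eq_bigr => i _.
by rewrite cdotZl normCK (cdotC z).
Qed.

Lemma cdot_pyth {n} (w p : 'cV[C]_n) : cdot w p = 0 ->
  cdot (w + p) (w + p) = cdot w w + cdot p p.
Proof.
move=> h; rewrite cdotDl !cdotDr h (cdotC w p) h conjC0 addr0 add0r //.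
Qed.

Lemma bessel {n k} {x : nat -> 'cV[C]_n} :
  (forall a b, (a < k)%N -> (b < k)%N -> cdot (x a) (x b) = (a == b)%:R) ->
  forall z, \sum_(a < k) `|cdot z (x a)| ^+ 2 <= cdot z z.
Proof.
move=> hx z.
pose p := \sum_(a < k) cdot z (x a) *: x a.
have hp : forall b, (b < k)%N -> cdot (z - p) (x b) = 0.
  move=> b hb; rewrite cdotBl cdot_suml (bigD1 (Ordinal hb)) //= cdotZl hx // eqxx mulr1.
  rewrite big1 ?addr0 ?subrr // => a hab; rewrite cdotZl hx //.
  by rewrite (_ : (val a == b) = false) ?mulr0 //; apply/negbTE; move: hab; apply: contra => /eqP h; apply/eqP/val_inj.
have hzp : cdot (z - p) p = 0.
  rewrite cdot_sumr big1 // => a _; by rewrite cdotZr hp // mulr0.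
have hpp : cdot p p = \sum_(a < k) `|cdot z (x a)| ^+ 2.
  rewrite /p cdot_suml; apply: eq_bigr => a _; rewrite cdotZl cdot_sumr.
  rewrite (bigD1 a) //= big1 ?addr0.
    by rewrite cdotZr hx // eqxx mulr1 normCK.
  move=> b hb; rewrite cdotZr hx //.
  by rewrite (_ : (val a == val b) = false) ?mulr0 //; apply/negbTE; move: hb; apply: contra => /eqP h; apply/eqP/val_inj.
have -> : cdot z z = cdot (z - p) (z - p) + cdot p p.
  by rewrite -(cdot_pyth _ _ hzp) subrK.
by rewrite hpp lerDr cdot_ge0.
Qed.

End Cdot.

Section D.
Variable C : numClosedFieldType.
Local Open Scope sesquilinear_scope.

Lemma exists_orth {n p k} (c : nat -> 'cV[C]_n) : (0 < k)%N -> (p + k <= n)%N ->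
  exists x : nat -> 'cV[C]_n,
    (forall a b, (a < k)%N -> (b < k)%N -> cdot (x a) (x b) = (a == b)%:R) /\
    (forall a t, (a < k)%N -> (t < p)%N -> cdot (x a) (c t) = 0).
Proof.
move=> k0 hpk.
pose M : 'M[C]_(n, p) := \matrix_(i, t) (c (val t) i 0)^*.
pose K := kermx M.
have rK : (k <= \rank K)%N.
  rewrite /K mxrank_ker; have := rank_leq_col M; lia.
pose R := schmidt (row_base K).
have Ru : R \is unitarymx by apply: schmidt_unitarymx; apply: rank_leq_col.
have RK : (R <= K)%MS.
  by rewrite /R (eqmx_schmidt_free (row_base_free K)) eq_row_base.
have r0 : (0 < \rank K)%N by apply: leq_trans rK.
pose i0 := Ordinal r0.
have vi : forall a, (a < k)%N -> val (insubd i0 a) = a.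
  move=> a ha; rewrite insubdK //; exact: leq_trans ha rK.
exists (fun a => (row (insubd i0 a) R)^T); split.
  move=> a b ha hb.
  have /row_unitarymxP hR := Ru.
  have -> : (a == b) = (insubd i0 a == insubd i0 b).
    by rewrite -val_eqE /= !vi.
  rewrite -hR dotmxE cdotE !mxE; apply: eq_bigr => j _; by rewrite !mxE.
move=> a t ha ht.
have /sub_kermxP := submx_trans (row_sub (insubd i0 a) R) RK.
move=> /matrixP /(_ 0 (Ordinal ht)); rewrite !mxE => <-.
rewrite cdotE; apply: eq_bigr => j _; by rewrite !mxE.
Qed.

End D.

Section E.
Variable C : numClosedFieldType.
Local Open Scope sesquilinear_scope.

Lemma char_poly_conj {m} (Q D R : 'M[C]_m) : R *m Q = 1%:M ->
  char_poly (Q *m D *m R) = char_poly D.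
Proof.
move=> hRQ; have hQR : Q *m R = 1%:M by apply: mulmx1C.
rewrite /char_poly /char_poly_mx.
set Q' := map_mx polyC Q; set R' := map_mx polyC R.
have hQR' : Q' *m R' = 1%:M by rewrite -map_mxM hQR map_mx1.
have hRQ' : R' *m Q' = 1%:M by rewrite -map_mxM hRQ map_mx1.
have -> : 'X%:M - map_mx polyC (Q *m D *m R) =
          Q' *m ('X%:M - map_mx polyC D) *m R'.
  rewrite !map_mxM mulmxBr mulmxBl -/Q' -/R'; congr (_ - _).
  by rewrite mul_mx_scalar -scalemxAl hQR' scalemx1.
rewrite !det_mulmx mulrC mulrA -det_mulmx hRQ' det1 mul1r //.
Qed.

Lemma ctrmxM {m p q} (X : 'M[C]_(m, p)) (Y : 'M[C]_(p, q)) :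
  ctrmx (X *m Y) = ctrmx Y *m ctrmx X.
Proof. by rewrite /ctrmx map_mxM trmx_mul. Qed.

Lemma ctrmxK {m p} (X : 'M[C]_(m, p)) : ctrmx (ctrmx X) = X.
Proof.
apply/matrixP => i j; rewrite /ctrmx !mxE /=. by rewrite conjCK.
Qed.

Lemma ctrmxE {m p} (X : 'M[C]_(m, p)) : ctrmx X = X ^t*.
Proof. by rewrite /ctrmx map_trmx. Qed.

Lemma cdot_col {m p q} (X : 'M[C]_(m, p)) (Z : 'M[C]_(m, q)) i j :
  cdot (col j X) (col i Z) = (ctrmx Z *m X) i j.
Proof.
rewrite cdotE !mxE; apply: eq_bigr => k _; by rewrite /ctrmx !mxE mulrC.
Qed.


Lemma spectral_compression {n} (hn : (2 <= n)%N) (A : 'M[C]_n) (hA : ctrmx A = A)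
  (u : 'cV[C]_n) (U : 'M[C]_(n, n.-1)) (hU : ctrmx U *m U = 1%:M)
  (hUu : ctrmx U *m u = 0) (mu : nat -> C)
  (hmu : char_poly (compression A U) = \prod_(1 <= j < n) ('X - (mu j)%:P)) :
  exists y : nat -> 'cV[C]_n,
  [/\ (forall j k, (1 <= j < n)%N -> (1 <= k < n)%N -> cdot (y j) (y k) = (j == k)%:R),
      (forall j, (1 <= j < n)%N -> cdot (y j) u = 0) &
      (forall j k, (1 <= j < n)%N -> (1 <= k < n)%N ->
         cdot (A *m y j) (y k) = (j == k)%:R * mu j)].
Proof.
case: n hn A hA u U hU hUu hmu => [|[|m]] // _ A hA u U hU hUu hmu.
set B := compression A U.
have hB : ctrmx B = B by rewrite /B /compression !ctrmxM ctrmxK hA mulmxA.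
have Bn : B \is normalmx.
  by apply/normalmxP; rewrite -ctrmxE hB.
set P := spectralmx B; set d := spectral_diag B.
have Pu : P \is unitarymx := spectral_unitarymx B.
have hPP : P *m ctrmx P = 1%:M by rewrite ctrmxE; apply/unitarymxP.
have hPP' : ctrmx P *m P = 1%:M by apply: mulmx1C.
have eB : B = ctrmx P *m diag_mx d *m P.
  by rewrite ctrmxE -invmx_unitary //; apply/orthomx_spectralP.
pose Y := U *m ctrmx P.
have hYY : ctrmx Y *m Y = 1%:M.
  by rewrite /Y ctrmxM ctrmxK mulmxA -(mulmxA P) hU mulmx1 hPP.
have hYu : ctrmx Y *m u = 0.
  by rewrite /Y ctrmxM ctrmxK -mulmxA hUu mulmx0.
have hYAY : ctrmx Y *m (A *m Y) = diag_mx d.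
  have -> : ctrmx Y *m (A *m Y) = P *m B *m ctrmx P.
    by rewrite /Y ctrmxM ctrmxK /B /compression !mulmxA.
  by rewrite eB !mulmxA hPP mul1mx -mulmxA hPP mulmx1.
pose t := mkseq (fun i => d 0 (inord i)) m.+1.
pose s := [seq mu j | j <- iota 1 m.+1].
have pst : perm_eq s t.
  apply: prod_XsubC_eq.
  rewrite big_map.
  have -> : \prod_(j <- iota 1 m.+1) ('X - (mu j)%:P) = \prod_(1 <= j < m.+2) ('X - (mu j)%:P) by [].
  rewrite -hmu -/B eB char_poly_conj // char_poly_trig ?diag_mx_is_trig //.
  rewrite /t /mkseq big_map -[iota 0 m.+1]/(index_iota 0 m.+1) big_mkord; apply: eq_bigr => i _.
  by rewrite !mxE eqxx mulr1n inord_val.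
have /(perm_iotaP 0) [Is hIs es] := pst.
have sI : size Is = m.+1 by rewrite (perm_size hIs) size_iota size_mkseq.
have uI : uniq Is by rewrite (perm_uniq hIs) iota_uniq.
pose sg j := nth 0%N Is j.
have sglt : forall j, (j < m.+1)%N -> (sg j < m.+1)%N.
  move=> j hj; have : sg j \in Is by rewrite mem_nth // sI.
  by rewrite (perm_mem hIs) mem_iota size_mkseq.
have sginj : forall j k, (j < m.+1)%N -> (k < m.+1)%N -> (sg j == sg k) = (j == k).
  by move=> j k hj hk; rewrite nth_uniq // sI.
have smu : forall j, (j < m.+1)%N -> mu j.+1 = d 0 (inord (sg j)).
  move=> j hj; have := congr1 (nth 0 ^~ j) es.
  rewrite (nth_map 0%N) ?size_iota // nth_iota // add1n => ->.
  by rewrite (nth_map 0%N) ?sI // nth_mkseq // sglt.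
pose y j := col (inord (sg j.-1)) Y.
have colA : forall i, A *m col i Y = col i (A *m Y).
  by move=> i; rewrite !colE mulmxA.
have einj : forall j k, (0 < j < m.+2)%N -> (0 < k < m.+2)%N ->
    (inord (sg k.-1) == inord (sg j.-1) :> 'I_m.+1) = (j == k).
  move=> j k /andP[j0 j1] /andP[k0 k1].
  rewrite -val_eqE /= !inordK ?sglt //; try lia.
  rewrite sginj; try lia.
exists y; split.
- move=> j k hj hk; rewrite /y cdot_col hYY !mxE einj //.
- move=> j hj; rewrite cdotC.
  have -> : cdot u (y j) = (ctrmx Y *m u) (inord (sg j.-1)) 0.
    rewrite cdotE !mxE; apply: eq_bigr => k _; by rewrite /ctrmx !mxE mulrC.
  by rewrite hYu mxE conjC0.
- move=> j k hj hk; rewrite /y colA cdot_col hYAY !mxE einj //.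
  case: eqP => [->|]; last by rewrite mulr0n mul0r.
  rewrite mulr1n mul1r.
  case/andP: hk => k0 k1.
  by rewrite -[in RHS](prednK k0) smu //; lia.
Qed.

End E.

Lemma sum_shift1 (V : nmodType) (F : nat -> V) m : \sum_(i < m) F i.+1 = \sum_(1 <= i < m.+1) F i.
Proof. by rewrite -(big_mkord (fun _ => true) (fun i => F i.+1)) big_add1. Qed.

Section Delta.
Context {C : numClosedFieldType}.
Lemma sum_delta (F : nat -> C) s t j : (s <= j < t)%N ->
  (forall k, (s <= k < t)%N -> k != j -> F k = 0) -> \sum_(s <= k < t) F k = F j.
Proof.
move=> hj hF; rewrite (bigD1_seq j) ?iota_uniq ?mem_index_iota //=.
rewrite big1_seq ?addr0 // => k /andP[hk]; rewrite mem_index_iota => hk'.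
exact: hF.
Qed.
End Delta.

Section Core.
Variable C : numClosedFieldType.
Variable n : nat.
Variable A : 'M[C]_n.
Variable lam : nat -> C.
Variable v : nat -> 'cV[C]_n.
Hypothesis heig : forall i, (1 <= i <= n)%N -> A *m v i = lam i *: v i.
Hypothesis horth : forall i j, (1 <= i <= n)%N -> (1 <= j <= n)%N ->
     cdot (v i) (v j) = (i == j)%:R.
Variable u : 'cV[C]_n.
Hypothesis hu : cdot u u = 1.
Variable mu : nat -> C.
Variable y : nat -> 'cV[C]_n.
Hypothesis hyy : forall j k, (1 <= j < n)%N -> (1 <= k < n)%N -> cdot (y j) (y k) = (j == k)%:R.
Hypothesis hyu : forall j, (1 <= j < n)%N -> cdot (y j) u = 0.
Hypothesis hyA : forall j k, (1 <= j < n)%N -> (1 <= k < n)%N ->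
         cdot (A *m y j) (y k) = (j == k)%:R * mu j.

Let fv i := v i.+1.
Lemma fv_orth : forall i j, (i < n)%N -> (j < n)%N -> cdot (fv i) (fv j) = (i == j)%:R.
Proof. by move=> i j hi hj; rewrite /fv horth ?eqSS //; lia. Qed.

Let fy i := if i == 0%N then u else y i.
Lemma fy_orth : forall i j, (i < n)%N -> (j < n)%N -> cdot (fy i) (fy j) = (i == j)%:R.
Proof.
move=> [|i] [|j] hi hj; rewrite /fy /=.
- by rewrite hu.
- by rewrite cdotC hyu ?conjC0 //; lia.
- by rewrite hyu //; lia.
- by rewrite hyy //; lia.
Qed.


Lemma vexp z : z = \sum_(1 <= i < n.+1) cdot z (v i) *: v i.
Proof. by rewrite {1}(onb_expand fv_orth z) (sum_shift1 _ (fun i => cdot z (v i) *: v i)). Qed.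

Lemma vpars z : cdot z z = \sum_(1 <= i < n.+1) `|cdot z (v i)| ^+ 2.
Proof. by rewrite (onb_parseval fv_orth z) (sum_shift1 _ (fun i => `|cdot z (v i)| ^+ 2)). Qed.

Lemma peel0 (F : nat -> C) : F 0%N = 0 -> \sum_(i < n) F i = \sum_(1 <= i < n) F i.
Proof.
move=> h; rewrite -(big_mkord (fun _ => true)); case: n => [|m]; first by rewrite !big_geq.
by rewrite big_ltn // h add0r.
Qed.

Lemma peel0v (F : nat -> 'cV[C]_n) : F 0%N = 0 -> \sum_(i < n) F i = \sum_(1 <= i < n) F i.
Proof.
move=> h; rewrite -(big_mkord (fun _ => true)); case: n F h => [|m] F h; first by rewrite !big_geq.
by rewrite big_ltn // h add0r.
Qed.

Lemma yexp z : cdot z u = 0 -> z = \sum_(1 <= j < n) cdot z (y j) *: y j.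
Proof.
move=> hz; rewrite {1}(onb_expand fy_orth z) (peel0v (fun i => cdot z (fy i) *: fy i)); last by rewrite /fy /= hz scale0r.
apply: eq_big_nat => j /andP[j1 _]; rewrite /fy; case: eqP => //; lia.
Qed.

Lemma ypars z : cdot z u = 0 -> cdot z z = \sum_(1 <= j < n) `|cdot z (y j)| ^+ 2.
Proof.
move=> hz; rewrite (onb_parseval fy_orth z) (peel0 (fun i => `|cdot z (fy i)| ^+ 2)); last by rewrite /fy /= hz normr0 expr0n.
apply: eq_big_nat => j /andP[j1 _]; rewrite /fy; case: eqP => //; lia.
Qed.

Lemma quad_v z : cdot (A *m z) z = \sum_(1 <= i < n.+1) lam i * `|cdot z (v i)| ^+ 2.
Proof.
rewrite {1}(vexp z) mulmx_sumr cdot_suml; apply: eq_big_nat => i hi.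
rewrite -scalemxAr heig; last by lia.
by rewrite scalerA cdotZl (cdotC z) normCK mulrA (mulrC (cdot z (v i))).
Qed.

Lemma quad_y z : cdot z u = 0 ->
  cdot (A *m z) z = \sum_(1 <= j < n) mu j * `|cdot z (y j)| ^+ 2.
Proof.
move=> hz; rewrite {1}(yexp _ hz) mulmx_sumr cdot_suml; apply: eq_big_nat => j hj.
rewrite -scalemxAr cdotZl [X in cdot (A *m y j) X](yexp _ hz) cdot_sumr.
rewrite (sum_delta _ _ _ j) //.
  by rewrite cdotZr hyA // eqxx mul1r normCK mulrA mulrC.
move=> k hk hkj; rewrite cdotZr hyA //; by rewrite eq_sym (negbTE hkj) mul0r mulr0.
Qed.


Variable k : nat.
Variable x : nat -> 'cV[C]_n.
Hypothesis hxx : forall a b, (a < k)%N -> (b < k)%N -> cdot (x a) (x b) = (a == b)%:R.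
Hypothesis hxu : forall a, (a < k)%N -> cdot (x a) u = 0.
Variables PI PJ : pred nat.
Hypothesis hxy : forall a j, (a < k)%N -> (1 <= j < n)%N -> ~~ PJ j -> cdot (x a) (y j) = 0.
Hypothesis hxv : forall a i, (a < k)%N -> (1 <= i <= n)%N -> ~~ PI i -> cdot (x a) (v i) = 0.

Definition ee j := \sum_(a < k) `|cdot (x a) (y j)| ^+ 2.
Definition cc i := \sum_(a < k) `|cdot (x a) (v i)| ^+ 2.
Definition TT := \sum_(a < k) cdot (A *m x a) (x a).

Lemma TT_y : TT = \sum_(1 <= j < n) mu j * ee j.
Proof.
rewrite /TT (eq_bigr (fun a : 'I_k => \sum_(1 <= j < n) mu j * `|cdot (x a) (y j)| ^+ 2)).
  by rewrite exchange_big; apply: eq_bigr => j _; rewrite /ee mulr_sumr.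
by move=> a _; rewrite quad_y // hxu.
Qed.

Lemma TT_v : TT = \sum_(1 <= i < n.+1) lam i * cc i.
Proof.
rewrite /TT (eq_bigr (fun a : 'I_k => \sum_(1 <= i < n.+1) lam i * `|cdot (x a) (v i)| ^+ 2)).
  by rewrite exchange_big; apply: eq_bigr => j _; rewrite /cc mulr_sumr.
by move=> a _; rewrite quad_v.
Qed.

Lemma ee_ge0 j : 0 <= ee j.
Proof. by apply: sumr_ge0 => a _; apply: exprn_ge0. Qed.

Lemma cc_ge0 i : 0 <= cc i.
Proof. by apply: sumr_ge0 => a _; apply: exprn_ge0. Qed.

Lemma ee0 j : (1 <= j < n)%N -> ~~ PJ j -> ee j = 0.
Proof. by move=> hj hP; rewrite /ee big1 // => a _; rewrite hxy // normr0 expr0n. Qed.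

Lemma cc0 i : (1 <= i <= n)%N -> ~~ PI i -> cc i = 0.
Proof. by move=> hi hP; rewrite /cc big1 // => a _; rewrite hxv // normr0 expr0n. Qed.

Lemma sum_ee : \sum_(1 <= j < n) ee j = k%:R.
Proof.
rewrite /ee exchange_big /= (eq_bigr (fun _ => 1)).
  by rewrite sumr_const card_ord.
by move=> a _; rewrite -ypars; [rewrite hxx // eqxx | exact: hxu].
Qed.

Lemma sum_cc : \sum_(1 <= i < n.+1) cc i = k%:R.
Proof.
rewrite /cc exchange_big /= (eq_bigr (fun _ => 1)).
  by rewrite sumr_const card_ord.
by move=> a _; rewrite -vpars hxx // eqxx.
Qed.

Lemma ee_le1 j : (1 <= j < n)%N -> ee j <= 1.
Proof.
move=> hj; rewrite /ee.
have -> : \sum_(a < k) `|cdot (x a) (y j)| ^+ 2 = \sum_(a < k) `|cdot (y j) (x a)| ^+ 2.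
  by apply: eq_bigr => a _; rewrite (cdotC (x a)) norm_conjC.
have := bessel hxx (y j); by rewrite (hyy _ _ hj hj) eqxx.
Qed.


Definition GG := \sum_(1 <= i < n.+1) (PI i)%:R * `|cdot u (v i)| ^+ 2.

Lemma cc_le i : (1 <= i <= n)%N -> PI i -> GG != 0 ->
  cc i <= 1 - `|cdot u (v i)| ^+ 2 / GG.
Proof.
move=> hi hPi hG.
pose g := \sum_(1 <= i' < n.+1) ((PI i')%:R * cdot u (v i')) *: v i'.
pose h := \sum_(1 <= i' < n.+1) ((~~ PI i')%:R * cdot u (v i')) *: v i'.
have ugh : u = g + h.
  rewrite {1}(vexp u) /g /h -big_split; apply: eq_bigr => i' _ /=.
  by rewrite -scalerDl -mulrDl; case: (PI i'); rewrite /= ?(addr0, add0r, mul1r, mulr1n, mulr0n).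
have cvg : forall i', (1 <= i' <= n)%N -> cdot (v i') g = (PI i')%:R * (cdot u (v i'))^*.
  move=> i' hi'; rewrite /g cdot_sumr (sum_delta _ _ _ i'); last first.
  - move=> j hj hji; rewrite cdotZr horth; try lia.
    by rewrite eq_sym (negbTE hji) mulr0.
  - lia.
  by rewrite cdotZr horth ?eqxx ?mulr1 ?rmorphM /= ?conjC_nat //; lia.
have hgg : cdot g g = GG.
  rewrite {1}/g cdot_suml /GG; apply: eq_big_nat => i' hi'.
  rewrite cdotZl cvg; last by lia.
  by rewrite normCK; case: (PI i'); rewrite /= ?mul1r ?mul0r.
have hxg : forall a, (a < k)%N -> cdot (x a) g = 0.
  move=> a ha.
  have hxh : cdot (x a) h = 0.
    rewrite /h cdot_sumr big1_seq //.
    move=> j /andP[_]; rewrite mem_index_iota => hj.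
    case hPj: (PI j); first by rewrite /= ?mulr0n ?mul0r ?scale0r ?cdot0r.
    by rewrite cdotZr hxv ?hPj ?mulr0 //; lia.
  by have := hxu _ ha; rewrite ugh cdotDr hxh addr0.
have G0 : 0 < GG by rewrite lt_def hG -hgg cdot_ge0.
set s := sqrtC GG.
have s0 : 0 < s by rewrite sqrtC_gt0.
have sc : s^* = s by apply: conj_Creal; apply: gtr0_real.
have s2 : s ^+ 2 = GG by rewrite sqrtCK.
pose gh := s^-1 *: g.
have sic : (s^-1)^* = s^-1 by rewrite fmorphV /= sc.
have hgh : cdot gh gh = 1.
  rewrite /gh cdotZl cdotZr hgg sic mulrA -expr2 exprVn s2 mulVf //.
pose x' a := if (a < k)%N then x a else gh.
have hx' : forall a b, (a < k.+1)%N -> (b < k.+1)%N -> cdot (x' a) (x' b) = (a == b)%:R.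
  move=> a b ha hb; rewrite /x'.
  case: ltnP => ha'; case: ltnP => hb'.
  - exact: hxx.
  - rewrite /gh cdotZr hxg // mulr0; have -> : a == b = false by apply/negbTE; lia.
    by [].
  - rewrite cdotC /gh cdotZr hxg // mulr0 conjC0; have -> : a == b = false by apply/negbTE; lia.
    by [].
  - have -> : a = k by lia.
    have -> : b = k by lia.
    by rewrite eqxx.
have := bessel hx' (v i).
rewrite big_ord_recr /= horth // eqxx /x' /= ltnn.
have -> : \sum_(a < k) `|cdot (v i) (if (a < k)%N then x a else gh)| ^+ 2 = cc i.
  rewrite /cc; apply: eq_bigr => a _; rewrite ltn_ord.
  by rewrite cdotC norm_conjC.
have -> : `|cdot (v i) gh| ^+ 2 = `|cdot u (v i)| ^+ 2 / GG.
  rewrite /gh cdotZr sic cvg // hPi mul1r normrM norm_conjC exprMn mulrC.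
  by rewrite normfV (ger0_norm (ltW s0)) exprVn s2.
by rewrite lerBrDr.
Qed.


Lemma core_summary : \sum_(1 <= i < n.+1) (PI i)%:R * `|cdot u (v i)| ^+ 2 != 0 ->
  exists e c : nat -> C,
  [/\ \sum_(1 <= j < n) mu j * e j = \sum_(1 <= i < n.+1) lam i * c i,
      (forall j, (1 <= j < n)%N -> 0 <= e j /\ e j <= 1),
      (forall j, (1 <= j < n)%N -> ~~ PJ j -> e j = 0),
      \sum_(1 <= j < n) e j = k%:R &
      [/\ (forall i, (1 <= i <= n)%N -> 0 <= c i),
          (forall i, (1 <= i <= n)%N -> ~~ PI i -> c i = 0),
          (forall i, (1 <= i <= n)%N -> PI i -> c i <= 1 - `|cdot u (v i)| ^+ 2 /
                \sum_(1 <= i < n.+1) (PI i)%:R * `|cdot u (v i)| ^+ 2) &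
          \sum_(1 <= i < n.+1) c i = k%:R]].
Proof.
move=> hG; exists ee, cc; split.
- by rewrite -TT_y TT_v.
- by move=> j hj; split; [apply: ee_ge0 | apply: ee_le1].
- exact: ee0.
- exact: sum_ee.
split.
- by move=> i _; apply: cc_ge0.
- exact: cc0.
- by move=> i hi hP; apply: cc_le.
- exact: sum_cc.
Qed.

End Core.

Section Scalar.
Context {C : numClosedFieldType}.
Implicit Types (f e d w : nat -> C).

Lemma rearr f e d (th : C) s t :
  (forall j, (s <= j < t)%N -> 0 <= (f j - th) * (d j - e j)) ->
  \sum_(s <= j < t) (f j - th) * e j <= \sum_(s <= j < t) (f j - th) * d j.
Proof.
move=> h; apply: ler_sum_nat => j hj; rewrite -subr_ge0 -mulrBr; exact: h.
Qed.

Lemma split_th f e (th : C) s t :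
  \sum_(s <= j < t) f j * e j = \sum_(s <= j < t) (f j - th) * e j + th * \sum_(s <= j < t) e j.
Proof.
rewrite mulr_sumr -big_split; apply: eq_bigr => j _ /=; by rewrite mulrBl subrK.
Qed.

Lemma ind_sum (F : nat -> C) s a b t : (s <= a)%N -> (a <= b)%N -> (b <= t)%N ->
  \sum_(s <= j < t) F j * (a <= j < b)%N%:R = \sum_(a <= j < b) F j.
Proof.
move=> h1 h2 h3.
rewrite (big_cat_nat h1 (leq_trans h2 h3)) (big_cat_nat h2 h3) /=.
rewrite big1_seq ?add0r; last first.
  move=> j /andP[_]; rewrite mem_index_iota => hj.
  by rewrite (_ : (a <= j < b)%N = false) ?mulr0 //; apply/negbTE; lia.
rewrite [X in _ + X]big1_seq ?addr0; last first.
  move=> j /andP[_]; rewrite mem_index_iota => hj.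
  by rewrite (_ : (a <= j < b)%N = false) ?mulr0 //; apply/negbTE; lia.
apply: eq_big_seq => j; rewrite mem_index_iota => hj.
by rewrite hj mulr1.
Qed.

Lemma chain (g : nat -> C) N : (forall i, (1 <= i)%N -> (i < N)%N -> g i.+1 <= g i) ->
  forall i j, (1 <= i)%N -> (i <= j)%N -> (j <= N)%N -> g j <= g i.
Proof.
move=> h i j hi; elim: j => [|j IH] hij hjN; first by lia.
case: (ltnP i j.+1) => hlt; last by have -> : j.+1 = i by lia.
apply: le_trans (h _ _ _) (IH _ _); lia.
Qed.


Variables (n l r : nat) (mu lam w : nat -> C) (G : C).
Hypothesis hl : (1 <= l)%N.
Hypothesis hlr : (l <= r)%N.
Hypothesis hr : (r <= n.-1)%N.
Hypothesis hn : (2 <= n)%N.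
Hypothesis hmu : forall j, (1 <= j)%N -> (j < n.-1)%N -> mu j.+1 <= mu j.
Hypothesis hlam : forall i, (1 <= i)%N -> (i < n)%N -> lam i.+1 <= lam i.

Let mch := chain _ _ hmu.
Let lch := chain _ _ hlam.

Lemma sum_const_lr (th : C) : \sum_(l <= j < r.+1) th = th * (r.+1 - l)%N%:R.
Proof. by rewrite sumr_const_nat mulr_natr. Qed.

Lemma UE (e : nat -> C) :
  (forall j, (1 <= j < n)%N -> 0 <= e j) ->
  (forall j, (1 <= j < n)%N -> e j <= 1) ->
  (forall j, (1 <= j < n)%N -> (r < j)%N -> e j = 0) ->
  \sum_(1 <= j < n) e j = (r.+1 - l)%N%:R ->
  \sum_(l <= j < r.+1) mu j <= \sum_(1 <= j < n) mu j * e j.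
Proof.
move=> e0 e1 er se.
rewrite (split_th _ _ (mu l)) se.
have := @rearr mu (fun j => (l <= j < r.+1)%N%:R) e (mu l) 1 n.
rewrite ind_sum; try lia.
move=> H; apply: le_trans (lerD (H _) (lexx _)); last first.
  move=> j hj; case: (boolP (l <= j < r.+1)%N) => hb /=; rewrite ?mulr1n ?mulr0n ?subr0.
    apply: mulr_le0; first by rewrite subr_le0; apply: mch; lia.
    by rewrite subr_le0; apply: e1.
  case: (ltnP j l) => hjl.
    apply: mulr_ge0; first by rewrite subr_ge0; apply: mch; lia.
    exact: e0.
  by rewrite er ?mulr0 //; lia.
by rewrite sumrB sum_const_lr subrK.
Qed.

Lemma LE (e : nat -> C) :
  (forall j, (1 <= j < n)%N -> 0 <= e j) ->
  (forall j, (1 <= j < n)%N -> e j <= 1) ->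
  (forall j, (1 <= j < n)%N -> (j < l)%N -> e j = 0) ->
  \sum_(1 <= j < n) e j = (r.+1 - l)%N%:R ->
  \sum_(1 <= j < n) mu j * e j <= \sum_(l <= j < r.+1) mu j.
Proof.
move=> e0 e1 el se.
rewrite (split_th _ _ (mu r)) se.
have := @rearr mu e (fun j => (l <= j < r.+1)%N%:R) (mu r) 1 n.
rewrite ind_sum; try lia.
move=> H; apply: le_trans (lerD (H _) (lexx _)) _.
  move=> j hj; case: (boolP (l <= j < r.+1)%N) => hb /=; rewrite ?mulr1n ?mulr0n ?sub0r.
    apply: mulr_ge0; first by rewrite subr_ge0; apply: mch; lia.
    by rewrite subr_ge0; apply: e1.
  case: (ltnP j l) => hjl.
    by rewrite el ?oppr0 ?mulr0 //; lia.
  apply: mulr_le0; first by rewrite subr_le0; apply: mch; lia.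
  by rewrite oppr_le0; apply: e0.
by rewrite sumrB sum_const_lr subrK.
Qed.


Lemma UC (c : nat -> C) :
  (forall i, (1 <= i <= n)%N -> 0 <= c i) ->
  (forall i, (1 <= i <= n)%N -> (i < l)%N -> c i = 0) ->
  (forall i, (1 <= i <= n)%N -> (l <= i)%N -> c i <= 1 - w i / G) ->
  \sum_(1 <= i < n.+1) c i = (r.+1 - l)%N%:R ->
  \sum_(1 <= i < n.+1) lam i * c i <=
  \sum_(l <= j < r.+1) lam j - \sum_(l <= j < r.+1) (w j / G) * (lam j - lam r.+1).
Proof.
move=> c0 cl cle sc.
rewrite (split_th _ _ (lam r.+1)) sc.
have := @rearr lam c (fun i => (1 - w i / G) * (l <= i < r.+1)%N%:R) (lam r.+1) 1 n.+1.
have -> : \sum_(1 <= i < n.+1) (lam i - lam r.+1) * ((1 - w i / G) * (l <= i < r.+1)%N%:R)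
   = \sum_(l <= i < r.+1) (lam i - lam r.+1) * (1 - w i / G).
  rewrite -(ind_sum _ 1 l r.+1 n.+1); try lia.
  by apply: eq_bigr => i _; rewrite mulrA.
move=> H; apply: le_trans (lerD (H _) (lexx _)) _.
  move=> i hi; case: (boolP (l <= i < r.+1)%N) => hb /=; rewrite ?mulr1n ?mulr0n ?mulr1 ?mulr0 ?sub0r.
    apply: mulr_ge0; first by rewrite subr_ge0; apply: lch; lia.
    by rewrite subr_ge0; apply: cle; lia.
  case: (ltnP i l) => hil.
    by rewrite cl ?oppr0 ?mulr0 //; lia.
  apply: mulr_le0; first by rewrite subr_le0; apply: lch; lia.
  by rewrite oppr_le0; apply: c0; lia.
rewrite le_eqVlt; apply/orP; left; apply/eqP.
have -> : \sum_(l <= i < r.+1) (lam i - lam r.+1) * (1 - w i / G) =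
  \sum_(l <= i < r.+1) (lam i - lam r.+1) - \sum_(l <= i < r.+1) (w i / G) * (lam i - lam r.+1).
  by rewrite -sumrB; apply: eq_bigr => i _; rewrite mulrBr mulr1 mulrC.
by rewrite sumrB sum_const_lr; ring.
Qed.

Lemma LC (c : nat -> C) :
  (forall i, (1 <= i <= n)%N -> 0 <= c i) ->
  (forall i, (1 <= i <= n)%N -> (r.+1 < i)%N -> c i = 0) ->
  (forall i, (1 <= i <= n)%N -> (i <= r.+1)%N -> c i <= 1 - w i / G) ->
  \sum_(1 <= i < n.+1) c i = (r.+1 - l)%N%:R ->
  \sum_(l <= j < r.+1) lam j.+1 + \sum_(l <= j < r.+1) (w j.+1 / G) * (lam l - lam j.+1)
  <= \sum_(1 <= i < n.+1) lam i * c i.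
Proof.
move=> c0 ch cle sc.
rewrite [X in _ <= X](split_th _ _ (lam l)) sc.
have := @rearr lam (fun i => (1 - w i / G) * (l.+1 <= i < r.+2)%N%:R) c (lam l) 1 n.+1.
have -> : \sum_(1 <= i < n.+1) (lam i - lam l) * ((1 - w i / G) * (l.+1 <= i < r.+2)%N%:R)
   = \sum_(l <= j < r.+1) (lam j.+1 - lam l) * (1 - w j.+1 / G).
  have -> : \sum_(l <= j < r.+1) (lam j.+1 - lam l) * (1 - w j.+1 / G) =
     \sum_(l.+1 <= i < r.+2) (lam i - lam l) * (1 - w i / G) by rewrite big_add1.
  rewrite -(ind_sum _ 1 l.+1 r.+2 n.+1); try lia.
  by apply: eq_bigr => i _; rewrite mulrA.
move=> H.
have Hc : forall i, (1 <= i < n.+1)%N ->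
  0 <= (lam i - lam l) * (c i - (1 - w i / G) * (l.+1 <= i < r.+2)%N%:R).
  move=> i hi; case: (boolP (l.+1 <= i < r.+2)%N) => hb /=; rewrite ?mulr1n ?mulr0n ?mulr1 ?mulr0 ?subr0.
    apply: mulr_le0; first by rewrite subr_le0; apply: lch; lia.
    by rewrite subr_le0; apply: cle; lia.
  case: (leqP i l) => hil.
    apply: mulr_ge0; first by rewrite subr_ge0; apply: lch; lia.
    by apply: c0; lia.
  by rewrite ch ?mulr0 //; lia.
apply: le_trans _ (lerD (H Hc) (lexx _)).
rewrite le_eqVlt; apply/orP; left; apply/eqP.
have -> : \sum_(l <= j < r.+1) (lam j.+1 - lam l) * (1 - w j.+1 / G) =
  \sum_(l <= j < r.+1) (lam j.+1 - lam l) + \sum_(l <= j < r.+1) (w j.+1 / G) * (lam l - lam j.+1).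
  by rewrite -big_split; apply: eq_bigr => i _ /=; ring.
by rewrite sumrB sum_const_lr; ring.
Qed.

End Scalar.

Lemma ind_ge (C : numClosedFieldType) (F : nat -> C) l n : (1 <= l)%N -> (l <= n.+1)%N ->
  \sum_(1 <= i < n.+1) (l <= i)%N%:R * F i = \sum_(l <= i < n.+1) F i.
Proof.
move=> h1 h2; rewrite -(ind_sum _ 1 l n.+1 n.+1) //.
apply: eq_big_nat => i hi; rewrite mulrC; congr (_ * _%:R); lia.
Qed.

Lemma ind_le (C : numClosedFieldType) (F : nat -> C) m n : (m <= n)%N ->
  \sum_(1 <= i < n.+1) (i <= m)%N%:R * F i = \sum_(1 <= i < m.+1) F i.
Proof.
move=> h; rewrite -(ind_sum _ 1 1 m.+1 n.+1) //; try lia.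
apply: eq_big_nat => i hi; rewrite mulrC; congr (_ * _%:R); lia.
Qed.

Theorem theorem3p2 (C : numClosedFieldType) (n : nat) (hn : (2 <= n)%N)
  (A : 'M[C]_n) (hA : ctrmx A = A)
  (lam : nat -> C) (v : nat -> 'cV[C]_n)
  (hlam_sorted : forall i, (1 <= i)%N -> (i < n)%N -> lam i.+1 <= lam i)
  (heig : forall i, (1 <= i <= n)%N -> A *m v i = lam i *: v i)
  (horth : forall i j, (1 <= i <= n)%N -> (1 <= j <= n)%N ->
     cdot (v i) (v j) = (i == j)%:R)
  (u : 'cV[C]_n) (hu : cdot u u = 1)
  (U : 'M[C]_(n, n.-1)) (hU : ctrmx U *m U = 1%:M) (hUu : ctrmx U *m u = 0)
  (mu : nat -> C)
  (hmu_sorted : forall j, (1 <= j)%N -> (j < n.-1)%N -> mu j.+1 <= mu j)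
  (hmu : char_poly (compression A U) = \prod_(1 <= j < n) ('X - (mu j)%:P))
  (l r : nat) (hl : (1 <= l)%N) (hlr : (l <= r)%N) (hr : (r <= n.-1)%N)
  (hUl : \sum_(l <= i < n.+1) `|cdot u (v i)| ^+ 2 != 0)
  (hLr : \sum_(1 <= i < r.+2) `|cdot u (v i)| ^+ 2 != 0) :
  let Ul := \sum_(l <= i < n.+1) `|cdot u (v i)| ^+ 2 in
  let Lr := \sum_(1 <= i < r.+2) `|cdot u (v i)| ^+ 2 in
  \sum_(l <= j < r.+1) lam j.+1
    + \sum_(l <= j < r.+1) (`|cdot u (v j.+1)| ^+ 2 / Lr) * (lam l - lam j.+1)
  <= \sum_(l <= j < r.+1) mu j
  /\
  \sum_(l <= j < r.+1) mu j
  <= \sum_(l <= j < r.+1) lam j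
     - \sum_(l <= j < r.+1) (`|cdot u (v j)| ^+ 2 / Ul) * (lam j - lam r.+1).
Proof.
move=> Ul Lr.
have [y [hyy hyu hyA]] := @spectral_compression C n hn A hA u U hU hUu mu hmu.
pose k := (r.+1 - l)%N.
have hk0 : (0 < k)%N by rewrite /k; lia.
have hpk : (n - k + k <= n)%N by rewrite /k; lia.
pose w i := `|cdot u (v i)| ^+ 2.
split.
-
  pose cL t := if (t < l.-1)%N then y t.+1 else if t == l.-1 then u else v ((r.+1 + (t - l.-1))%N).
  have [x [hxx hxc]] := @exists_orth C n (n - k)%N k cL hk0 hpk.
  have hxu : forall a, (a < k)%N -> cdot (x a) u = 0.
    move=> a ha; have := hxc a l.-1 ha; rewrite /cL ltnn eqxx; apply; rewrite /k; lia.
  have hxy : forall a j, (a < k)%N -> (1 <= j < n)%N -> ~~ (l <= j)%N -> cdot (x a) (y j) = 0.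
    move=> a j ha hj hjl; have := hxc a j.-1 ha; rewrite /cL.
    rewrite (_ : (j.-1 < l.-1)%N = true); last by lia.
    rewrite prednK; last by lia.
    apply; rewrite /k; lia.
  have hxv : forall a i, (a < k)%N -> (1 <= i <= n)%N -> ~~ (i <= r.+1)%N -> cdot (x a) (v i) = 0.
    move=> a i ha hi hir; have := hxc a (i - r.+1 + l.-1)%N ha; rewrite /cL.
    rewrite (_ : (i - r.+1 + l.-1 < l.-1)%N = false); last by lia.
    rewrite (_ : ((i - r.+1 + l.-1)%N == l.-1) = false); last by lia.
    rewrite (_ : (r.+1 + (i - r.+1 + l.-1 - l.-1))%N = i); last by lia.
    apply; rewrite /k; lia.
  have hG : \sum_(1 <= i < n.+1) (i <= r.+1)%N%:R * `|cdot u (v i)| ^+ 2 = Lr.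
    rewrite ind_le //; lia.
  have := @core_summary _ _ A lam v heig horth u hu mu y hyy hyu hyA k x hxx hxu
    (fun i => (i <= r.+1)%N) (fun j => (l <= j)%N) hxy hxv.
  rewrite hG => /(_ hLr) [e [c [hTT he heP hse [hc0 hcP hcle hsc]]]].
  apply: le_trans (@LC C n l r lam w Lr hl hlr hr hn hlam_sorted c hc0 _ _ hsc) _.
  + move=> i hi hir; apply: hcP => //; lia.
  + by move=> i hi hir; apply: hcle.
  rewrite -hTT.
  apply: (@LE C n l r mu hl hlr hr hn hmu_sorted e).
  + by move=> j hj; case: (he j hj).
  + by move=> j hj; case: (he j hj).
  + move=> j hj hjl; apply: heP => //; lia.
  + exact: hse.
-
  pose cU t := if (t < l.-1)%N then v t.+1 else if t == l.-1 then u else y ((r + (t - l.-1))%N).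
  have [x [hxx hxc]] := @exists_orth C n (n - k)%N k cU hk0 hpk.
  have hxu : forall a, (a < k)%N -> cdot (x a) u = 0.
    move=> a ha; have := hxc a l.-1 ha; rewrite /cU ltnn eqxx; apply; rewrite /k; lia.
  have hxy : forall a j, (a < k)%N -> (1 <= j < n)%N -> ~~ (j <= r)%N -> cdot (x a) (y j) = 0.
    move=> a j ha hj hjr; have := hxc a (j - r + l.-1)%N ha; rewrite /cU.
    rewrite (_ : (j - r + l.-1 < l.-1)%N = false); last by lia.
    rewrite (_ : ((j - r + l.-1)%N == l.-1) = false); last by lia.
    rewrite (_ : (r + (j - r + l.-1 - l.-1))%N = j); last by lia.
    apply; rewrite /k; lia.
  have hxv : forall a i, (a < k)%N -> (1 <= i <= n)%N -> ~~ (l <= i)%N -> cdot (x a) (v i) = 0.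
    move=> a i ha hi hil; have := hxc a i.-1 ha; rewrite /cU.
    rewrite (_ : (i.-1 < l.-1)%N = true); last by lia.
    rewrite prednK; last by lia.
    apply; rewrite /k; lia.
  have hG : \sum_(1 <= i < n.+1) (l <= i)%N%:R * `|cdot u (v i)| ^+ 2 = Ul.
    rewrite ind_ge //; lia.
  have := @core_summary _ _ A lam v heig horth u hu mu y hyy hyu hyA k x hxx hxu
    (fun i => (l <= i)%N) (fun j => (j <= r)%N) hxy hxv.
  rewrite hG => /(_ hUl) [e [c [hTT he heP hse [hc0 hcP hcle hsc]]]].
  apply: le_trans _ (@UC C n l r lam w Ul hl hlr hr hn hlam_sorted c hc0 _ _ hsc).
  + rewrite -hTT.
    apply: (@UE C n l r mu hl hlr hr hn hmu_sorted e).
    * by move=> j hj; case: (he j hj).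
    * by move=> j hj; case: (he j hj).
    * move=> j hj hjr; apply: heP => //; lia.
    * exact: hse.
  + move=> i hi hil; apply: hcP => //; lia.
  + by move=> i hi hil; apply: hcle.
Qed.
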